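(* Let $\mathbb{E}$ be a finitely complete category, $\Sigma$ a fibrational class of split epimorphisms, and suppose $\mathbb{E}$ is a $\Sigma$-Mal'tsev category. Let $R$ be a reflexive relation and $S$ a $\Sigma$-relation on an object $X$ with $[R,S]=0$, and let $p\colon R\times_XS\to X$ be a connector. Write, for generalized elements $x,y,z\colon T\to X$ with $xRy$ and $ySz$, $p(xRySz)$ for the corresponding composite $T\to X$. Then: (1) (coherence) for all such $x,y,z$ one has $x\,S\,p(xRySz)$ and $p(xRySz)\,R\,z$; (2) (left associativity) for all $x,y,z,t$ with $xRySzSt$, one has $p(p(xRySz)RzSt)=p(xRySt)$; (3) (right associativity) if moreover $R$ is a preorder, then for all $x,y,z,t$ with $xRyRzSt$, one has $p(xRySp(yRzSt))=p(xRzSt)$.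
   Context: A split epimorphism is a pair $(f,s)$ with $fs=1$. A class $\Sigma$ of split epimorphisms is fibrational if it contains all split epimorphisms $(f,s)$ with $f$ invertible and is stable under pullback along any morphism. A pair of morphisms with common codomain $Z$ is jointly extremally epic if it factors jointly through no non-invertible monomorphism into $Z$. $\mathbb{E}$ is $\Sigma$-Mal'tsev if for every split epimorphism $(f,s)\colon X\rightleftarrows Y$ in $\Sigma$ and every split epimorphism $(g,t)$ with $g\colon Y'\to Y$, letting $X'=Y'\times_YX$, $s'=(1_{Y'},sg)$, $\bar t=(tf,1_X)$, the pair $(s',\bar t)$ is jointly extremally epic. A $\Sigma$-relation is a reflexive relation $(d_0,d_1)\colon S\rightarrowtail X\times X$ with reflexivity $s_0$ such that $(d_0,s_0)\in\Sigma$ (such $S$ is automatically transitive in a $\Sigma$-Mal'tsev category). For reflexive relations $R,S$ on $X$, $R\times_XS$ is the pullback of $d_0^S$ along $d_1^R$ (elements $xRySz$), $\sigma_0^R\colon R\to R\times_XS$, $xRy\mapsto xRySy$, and $\sigma_0^S\colon S\to R\times_XS$, $ySz\mapsto yRySz$. $[R,S]=0$ means there is a morphism $p\colon R\times_XS\to X$ (a connector) with $p\sigma_0^R=d_0^R$ and $p\sigma_0^S=d_1^S$, i.e. $p(xRySy)=x$, $p(yRySz)=z$. A preorder is a reflexive transitive relation. *)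

(* Defs.v *)
Set Implicit Arguments.
Unset Strict Implicit.

Record Cat := {
  Obj :> Type;
  Hom : Obj -> Obj -> Type;
  idm : forall A, Hom A A;
  comp : forall A B C, Hom B C -> Hom A B -> Hom A C;
  comp_id_l : forall A B (f : Hom A B), comp (idm B) f = f;
  comp_id_r : forall A B (f : Hom A B), comp f (idm A) = f;
  comp_assoc : forall A B C D (h : Hom C D) (g : Hom B C) (f : Hom A B),
      comp h (comp g f) = comp (comp h g) f
}.

Arguments Hom {c} _ _.
Arguments idm {c} A.
Arguments comp {c A B C} _ _.

Notation "g \o' f" := (comp g f) (at level 40, left associativity).

Section Defs.
Variable C : Cat.

Definition is_pullback {A B Z : C} (f : Hom A Z) (g : Hom B Z)
    {P : C} (p1 : Hom P A) (p2 : Hom P B) : Prop :=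
  f \o' p1 = g \o' p2 /\
  forall (Q : C) (q1 : Hom Q A) (q2 : Hom Q B), f \o' q1 = g \o' q2 ->
    exists u : Hom Q P, (p1 \o' u = q1 /\ p2 \o' u = q2) /\
      forall v : Hom Q P, p1 \o' v = q1 -> p2 \o' v = q2 -> v = u.

Definition is_terminal (T : C) : Prop :=
  forall A : C, exists u : Hom A T, forall v : Hom A T, v = u.

Definition finitely_complete : Prop :=
  (exists T : C, is_terminal T) /\
  forall (A B Z : C) (f : Hom A Z) (g : Hom B Z),
    exists (P : C) (p1 : Hom P A) (p2 : Hom P B), is_pullback f g p1 p2.

Definition is_mono {A B : C} (m : Hom A B) : Prop :=
  forall (T : C) (a b : Hom T A), m \o' a = m \o' b -> a = b.

Definition is_iso {A B : C} (f : Hom A B) : Prop :=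
  exists g : Hom B A, g \o' f = idm A /\ f \o' g = idm B.

Definition jointly_extremally_epic {A B Z : C} (a : Hom A Z) (b : Hom B Z)
  : Prop :=
  forall (M : C) (m : Hom M Z), is_mono m ->
    forall (a' : Hom A M) (b' : Hom B M), m \o' a' = a -> m \o' b' = b ->
      is_iso m.

(* a class of split epimorphisms (f, s) : X <=> Y, f : X -> Y, s : Y -> X *)
Definition SEClass : Type := forall X Y : C, Hom X Y -> Hom Y X -> Prop.

Definition fibrational (Sig : SEClass) : Prop :=
  (forall X Y (f : Hom X Y) (s : Hom Y X), Sig X Y f s -> f \o' s = idm Y) /\
  (forall X Y (f : Hom X Y) (s : Hom Y X), f \o' s = idm Y -> is_iso f ->
      Sig X Y f s) /\
  (forall X Y (f : Hom X Y) (s : Hom Y X), Sig X Y f s ->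
     forall (Y' : C) (g : Hom Y' Y) (P : C) (f' : Hom P Y') (g' : Hom P X),
       is_pullback g f f' g' ->
       forall s' : Hom Y' P, f' \o' s' = idm Y' -> g' \o' s' = s \o' g ->
         Sig P Y' f' s').

Definition sigma_maltsev (Sig : SEClass) : Prop :=
  forall X Y (f : Hom X Y) (s : Hom Y X), Sig X Y f s ->
  forall (Y' : C) (g : Hom Y' Y) (t : Hom Y Y'), g \o' t = idm Y ->
  forall (X' : C) (p1 : Hom X' Y') (p2 : Hom X' X), is_pullback g f p1 p2 ->
  forall (s' : Hom Y' X') (tb : Hom X X'),
    p1 \o' s' = idm Y' -> p2 \o' s' = s \o' g ->
    p1 \o' tb = t \o' f -> p2 \o' tb = idm X ->
    jointly_extremally_epic s' tb.

Definition jointly_monic {S X : C} (d0 d1 : Hom S X) : Prop :=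
  forall (T : C) (a b : Hom T S), d0 \o' a = d0 \o' b -> d1 \o' a = d1 \o' b ->
    a = b.

Record RRel (X : C) := {
  rel_obj : C;
  d0 : Hom rel_obj X;
  d1 : Hom rel_obj X;
  s0 : Hom X rel_obj;
  rel_mono : jointly_monic d0 d1;
  d0s0 : d0 \o' s0 = idm X;
  d1s0 : d1 \o' s0 = idm X
}.

Definition sigma_relation (Sig : SEClass) {X : C} (S : RRel X) : Prop :=
  Sig (rel_obj S) X (d0 S) (s0 S).

Definition relates {X : C} (R : RRel X) {T : C} (x y : Hom T X) : Prop :=
  exists w : Hom T (rel_obj R), d0 R \o' w = x /\ d1 R \o' w = y.

Definition is_transitive {X : C} (R : RRel X) : Prop :=
  forall (T : C) (x y z : Hom T X), relates R x y -> relates R y z ->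
    relates R x z.

(* a preorder: reflexive (built into RRel) and transitive *)
Definition is_preorder {X : C} (R : RRel X) : Prop := is_transitive R.

(* p : P -> X is a connector, where (pi1, pi2) : P -> R, S is a pullback of
   d0^S along d1^R (i.e. P = R x_X S);  p sigma0^R = d0^R, p sigma0^S = d1^S *)
Definition is_connector {X : C} (R S : RRel X) {P : C}
    (pi1 : Hom P (rel_obj R)) (pi2 : Hom P (rel_obj S)) (p : Hom P X) : Prop :=
  (forall sg : Hom (rel_obj R) P,
      pi1 \o' sg = idm (rel_obj R) -> pi2 \o' sg = s0 S \o' d1 R ->
      p \o' sg = d0 R) /\
  (forall sg : Hom (rel_obj S) P,
      pi1 \o' sg = s0 R \o' d0 S -> pi2 \o' sg = idm (rel_obj S) ->
      p \o' sg = d1 S).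

(* papp ... x y z v  means  "x R y S z and p(xRySz) = v" *)
Definition papp {X : C} (R S : RRel X) {P : C}
    (pi1 : Hom P (rel_obj R)) (pi2 : Hom P (rel_obj S)) (p : Hom P X)
    {T : C} (x y z v : Hom T X) : Prop :=
  exists (r : Hom T (rel_obj R)) (s : Hom T (rel_obj S)) (u : Hom T P),
    d0 R \o' r = x /\ d1 R \o' r = y /\ d0 S \o' s = y /\ d1 S \o' s = z /\
    pi1 \o' u = r /\ pi2 \o' u = s /\ p \o' u = v.

End Defs.

Arguments finitely_complete : clear implicits.

(* Main.v *)
Require Import Defs.
Set Implicit Arguments.
Unset Strict Implicit.
Ltac norm := repeat rewrite <- comp_assoc; repeat rewrite comp_id_l; repeat rewrite comp_id_r.
Section W.
Variable C : Cat.
Lemma al1 (A B D : C) (a : Hom B D) (b : Hom A B) c : a \o' b = c -> forall Z (k : Hom Z A), a \o' (b \o' k) = c \o' k.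
Proof. intros e Z k. rewrite comp_assoc, e. reflexivity. Qed.
Lemma al2 (A B D E : C) (a : Hom D E) (b : Hom B D) (c0 : Hom A B) d : a \o' (b \o' c0) = d -> forall Z (k : Hom Z A), a \o' (b \o' (c0 \o' k)) = d \o' k.
Proof. intros e Z k. rewrite (comp_assoc b), (comp_assoc a), <- e, comp_assoc. reflexivity. Qed.

Ltac rw e := first [rewrite e | rewrite (al1 e) | rewrite (al2 e)]; norm.
Lemma pb_ext {A B Z P : C} (f : Hom A Z) (g : Hom B Z) (p1 : Hom P A) (p2 : Hom P B) :
  is_pullback f g p1 p2 -> forall T (u v : Hom T P), p1 \o' u = p1 \o' v -> p2 \o' u = p2 \o' v -> u = v.
Proof.
  intros [H1 H2] T u v E1 E2.
  destruct (H2 T (p1 \o' u) (p2 \o' u)) as [w [_ Hw]].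
  - rewrite !comp_assoc, H1. reflexivity.
  - rewrite (Hw u), (Hw v); auto.
Qed.
Lemma pb_pair {A B Z P : C} (f : Hom A Z) (g : Hom B Z) (p1 : Hom P A) (p2 : Hom P B) :
  is_pullback f g p1 p2 -> forall T (q1 : Hom T A) (q2 : Hom T B), f \o' q1 = g \o' q2 ->
  exists u, p1 \o' u = q1 /\ p2 \o' u = q2.
Proof. intros [H1 H2] T q1 q2 E. destruct (H2 T q1 q2 E) as [u [Hu _]]. eauto. Qed.
Lemma jm_ext {S X : C} (a0 a1 : Hom S X) : jointly_monic a0 a1 -> forall T (u v : Hom T S),
  a0 \o' u = a0 \o' v -> a1 \o' u = a1 \o' v -> u = v.
Proof. intros H T u v; apply H. Qed.

Lemma factor_lemma : finitely_complete C -> forall (X : C) (Q : RRel X) (G A B : C)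
  (a : Hom A G) (b : Hom B G), jointly_extremally_epic a b -> forall f g : Hom G X,
  relates Q (f \o' a) (g \o' a) -> relates Q (f \o' b) (g \o' b) -> relates Q f g.
Proof.
  intros [[One Ht] PBs] X Q G A B a b J f g [wa [Ha0 Ha1]] [wb [Hb0 Hb1]].
  destruct (Ht X) as [tX _].
  destruct (PBs X X One tX tX) as [Pr [pr1 [pr2 Hpr]]].
  assert (pairing : forall Y (h k : Hom Y X), exists u, pr1 \o' u = h /\ pr2 \o' u = k).
  { intros Y h k. apply (pb_pair Hpr). destruct (Ht Y) as [t1 Ht1].
    rewrite (Ht1 (tX \o' h)), (Ht1 (tX \o' k)). reflexivity. }
  destruct (pairing _ (d0 Q) (d1 Q)) as [m0 [Hm1 Hm2]].
  destruct (pairing _ f g) as [h [Hh1 Hh2]].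
  destruct (PBs _ _ _ h m0) as [M [mm [nn HM]]].
  assert (HMc := proj1 HM).
  assert (mono : is_mono mm).
  { intros T u v E. apply (pb_ext HM); auto.
    apply (@rel_mono _ _ Q).
    - rewrite <- Hm1. norm. rw (eq_sym HMc). rw E. rw HMc. reflexivity.
    - rewrite <- Hm2. norm. rw (eq_sym HMc). rw E. rw HMc. reflexivity. }
  assert (Ea : h \o' a = m0 \o' wa).
  { apply (pb_ext Hpr); norm. rw Hh1. rw Hm1. auto. rw Hh2. rw Hm2. auto. }
  assert (Eb : h \o' b = m0 \o' wb).
  { apply (pb_ext Hpr); norm. rw Hh1. rw Hm1. auto. rw Hh2. rw Hm2. auto. }
  destruct (pb_pair HM Ea) as [a' [Ha' _]].
  destruct (pb_pair HM Eb) as [b' [Hb' _]].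
  destruct (J M mm mono a' b' Ha' Hb') as [j [_ Hj]].
  exists (nn \o' j). split.
  - rewrite <- Hm1. norm. rw (eq_sym HMc). rw Hj. rw Hh1. reflexivity.
  - rewrite <- Hm2. norm. rw (eq_sym HMc). rw Hj. rw Hh2. reflexivity.
Qed.
Lemma maltsev_pair (Sig : SEClass C) : fibrational Sig -> sigma_maltsev Sig ->
  forall X Y (f : Hom X Y) (s : Hom Y X), Sig X Y f s ->
  forall Y' (g : Hom Y' Y) (t : Hom Y Y'), g \o' t = idm Y ->
  forall X' (p1 : Hom X' Y') (p2 : Hom X' X), is_pullback g f p1 p2 ->
  exists (s' : Hom Y' X') (tb : Hom X X'), p1 \o' s' = idm Y' /\ p2 \o' s' = s \o' g /\
    p1 \o' tb = t \o' f /\ p2 \o' tb = idm X /\ jointly_extremally_epic s' tb.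
Proof.
  intros [Hsp _] HM X Y f s Hs Y' g t Hgt X' p1 p2 Hpb.
  destruct (pb_pair Hpb (q1 := idm Y') (q2 := s \o' g)) as [s' [E1 E2]].
  { rewrite comp_id_r, comp_assoc, (Hsp _ _ _ _ Hs), comp_id_l. reflexivity. }
  destruct (pb_pair Hpb (q1 := t \o' f) (q2 := idm X)) as [tb [F1 F2]].
  { rewrite comp_id_r, comp_assoc, Hgt, comp_id_l. reflexivity. }
  exists s', tb. repeat split; auto.
  eapply HM; eauto.
Qed.

Definition eqR (X : C) : RRel X.
Proof.
  refine {| rel_obj := X; d0 := idm X; d1 := idm X; s0 := idm X |}.
  - intros T a b E _. rewrite !comp_id_l in E. exact E.
  - apply comp_id_l.
  - apply comp_id_l.
Defined.
Lemma eqR_eq (X T : C) (f g : Hom T X) : relates (eqR X) f g -> f = g.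
Proof. intros [w [E1 E2]]. simpl in *. rewrite comp_id_l in E1, E2. congruence. Qed.
End W.
Ltac rw e := first [rewrite e | rewrite (al1 e) | rewrite (al2 e)]; norm.
Ltac nh H := repeat rewrite <- comp_assoc in H; repeat rewrite comp_id_l in H; repeat rewrite comp_id_r in H.
Ltac simp := norm; repeat (match goal with H : _ = _ |- _ => progress rw H end).
Ltac nall := repeat match goal with H : _ = _ |- _ => progress nh H end.

Lemma eq_rel (C : Cat) (X T : C) (f g : Hom T X) : f = g -> relates (eqR X) f g.
Proof. intros E. rewrite E. exists g. simpl. rewrite comp_id_l. auto. Qed.

Theorem proposition3p7 (C : Cat) (Sig : SEClass C) :
  finitely_complete C -> fibrational Sig -> sigma_maltsev Sig ->
  forall (X : C) (R S : RRel X), sigma_relation Sig S ->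
  forall (P : C) (pi1 : Hom P (rel_obj R)) (pi2 : Hom P (rel_obj S)),
    is_pullback (d1 R) (d0 S) pi1 pi2 ->
  forall p : Hom P X, is_connector pi1 pi2 p ->
  (* (1) coherence *)
  (forall (T : C) (x y z v : Hom T X),
      papp pi1 pi2 p x y z v -> relates S x v /\ relates R v z) /\
  (* (2) left associativity: p(p(xRySz) R z S t) = p(xRySt) *)
  (forall (T : C) (x y z t v w : Hom T X),
      relates R x y -> relates S y z -> relates S z t ->
      papp pi1 pi2 p x y z v -> papp pi1 pi2 p x y t w ->
      papp pi1 pi2 p v z t w) /\
  (* (3) right associativity, for R a preorder: p(xRy S p(yRzSt)) = p(xRzSt) *)
  (is_preorder R ->
   forall (T : C) (x y z t v w : Hom T X),
      relates R x y -> relates R y z -> relates S z t ->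
      papp pi1 pi2 p y z t v -> papp pi1 pi2 p x z t w ->
      papp pi1 pi2 p x y v w).
Proof.
  intros FC Fib HM X R S HS P pi1 pi2 HP p [HcR HcS].
  assert (HPc := proj1 HP).
  pose proof (d0s0 R) as R0; pose proof (d1s0 R) as R1.
  pose proof (d0s0 S) as S0; pose proof (d1s0 S) as S1.
  destruct (maltsev_pair Fib HM HS (d1s0 R) HP) as [sR [sS [ER1 [ER2 [ES1 [ES2 JP]]]]]].
  pose proof (HcR sR ER1 ER2) as pR. pose proof (HcS sS ES1 ES2) as pS.
  clear HcR HcS.
  assert (Hphi : relates S (d0 R \o' pi1) p).
  { apply (factor_lemma FC JP); [exists (s0 S \o' d0 R) | exists (idm _)]; split; simp; reflexivity. }
  destruct Hphi as [phi [Phi0 Phi1]].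
  assert (Hrho : relates R p (d1 S \o' pi2)).
  { apply (factor_lemma FC JP); [exists (idm _) | exists (s0 R \o' d1 S)]; split; simp; reflexivity. }
  destruct Hrho as [rho [Rho0 Rho1]].
  nall.
  split.
  { intros T x y z v [r [s [u [Hx [Hy1 [Hy2 [Hz [Hu1 [Hu2 Hv]]]]]]]]]. subst.
    split; [exists (phi \o' u) | exists (rho \o' u)]; split; simp; reflexivity. }

  destruct (proj2 FC _ _ _ (d1 S) (d0 S)) as [SS [q1 [q2 HSS]]].
  destruct (maltsev_pair Fib HM HS S1 HSS) as [a1 [b1 [A1 [A2 [B1 [B2 JS]]]]]].
  assert (Htau : relates S (d0 S \o' q1) (d1 S \o' q2)).
  { apply (factor_lemma FC JS); [exists (idm _) | exists (idm _)]; split; simp; reflexivity. }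
  destruct Htau as [tau [Tau0 Tau1]].
  assert (Strans : is_transitive S).
  { intros T x y z [w1 [W1 W2]] [w2 [W3 W4]]. subst.
    destruct (pb_pair HSS (q1 := w1) (q2 := w2)) as [k [K1 K2]]; [auto|].
    exists (tau \o' k); split; simp; reflexivity. }
  clear q1 q2 HSS a1 b1 A1 A2 B1 B2 JS tau Tau0 Tau1 SS.
  split.
  { destruct (proj2 FC _ _ _ (d1 S \o' pi2) (d0 S)) as [G [g1 [g2 HG]]].
    assert (Hgt : (d1 S \o' pi2) \o' (sS \o' s0 S) = idm X) by (simp; reflexivity).
    destruct (maltsev_pair Fib HM HS Hgt HG) as [a2 [b2 [A1 [A2 [B1 [B2 J2]]]]]].
    assert (HGc := proj1 HG). nall.
    destruct (Strans G (d0 S \o' (pi2 \o' g1)) (d1 S \o' (pi2 \o' g1)) (d1 S \o' g2)) as [sw [Sw0 Sw1]].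
    { exists (pi2 \o' g1); split; simp; reflexivity. }
    { exists g2; split; simp; reflexivity. }
    destruct (pb_pair HP (q1 := pi1 \o' g1) (q2 := sw)) as [ub [Ub1 Ub2]].
    { simp. reflexivity. }
    destruct (pb_pair HP (q1 := rho \o' g1) (q2 := g2)) as [ua [Ua1 Ua2]].
    { simp. reflexivity. }
    nall.
    assert (Key : p \o' ua = p \o' ub).
    { apply eqR_eq. apply (factor_lemma FC J2); apply eq_rel.
      - assert (E1 : ua \o' a2 = sR \o' rho).
        { apply (pb_ext HP); simp; reflexivity. }
        assert (E2 : sw \o' a2 = pi2).
        { apply (@rel_mono _ _ S); simp; reflexivity. }
        assert (E3 : ub \o' a2 = idm _).
        { apply (pb_ext HP); simp; reflexivity. }
        simp. reflexivity.
      - assert (E0 : rho \o' sS = s0 R \o' d1 S).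
        { apply (@rel_mono _ _ R); simp; reflexivity. }
        assert (E1 : ua \o' b2 = sS).
        { apply (pb_ext HP); simp; reflexivity. }
        assert (E2 : sw \o' b2 = idm _).
        { apply (@rel_mono _ _ S); simp; reflexivity. }
        assert (E3 : ub \o' b2 = sS).
        { apply (pb_ext HP); simp; reflexivity. }
        simp. reflexivity. }
    intros T x y z t v w _ _ [s3 [S30 S31]] [r [s1 [u1 [Hx [Hy1 [Hy2 [Hz [Hu1 [Hu2 Hv]]]]]]]]]
      [r' [s2 [u2 [Hx' [Hy1' [Hy2' [Hz' [Hu1' [Hu2' Hv']]]]]]]]].
    subst x y z t v w r s1 r' s2. clear Hy2.
    destruct (pb_pair HG (q1 := u1) (q2 := s3)) as [k [K1 K2]].
    { simp. reflexivity. }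
    nall.
    assert (E1 : pi1 \o' u2 = pi1 \o' u1).
    { apply (@rel_mono _ _ R); simp; reflexivity. }
    assert (E2 : sw \o' k = pi2 \o' u2).
    { apply (@rel_mono _ _ S); simp; reflexivity. }
    assert (E3 : ub \o' k = u2).
    { apply (pb_ext HP); simp; reflexivity. }
    exists (rho \o' u1), s3, (ua \o' k).
    repeat split; simp; try reflexivity.
    }
  { intros Rtrans.
    destruct (proj2 FC _ _ _ (d1 R) (d0 R)) as [RR [h1 [h2 HRR]]].
    assert (HRRc := proj1 HRR).
    destruct (pb_pair HRR (q1 := s0 R) (q2 := s0 R)) as [dl [D1 D2]].
    { simp. reflexivity. }
    destruct (proj2 FC _ _ _ (d1 R \o' h2) (d0 S)) as [G [g1 [g2 HG]]].
    assert (Hgt : (d1 R \o' h2) \o' dl = idm X) by (simp; reflexivity).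
    destruct (maltsev_pair Fib HM HS Hgt HG) as [a2 [b2 [A1 [A2 [B1 [B2 J2]]]]]].
    assert (HGc := proj1 HG). nall.
    destruct (Rtrans RR (d0 R \o' h1) (d1 R \o' h1) (d1 R \o' h2)) as [th [Th0 Th1]].
    { exists h1; split; simp; reflexivity. }
    { exists h2; split; simp; reflexivity. }
    destruct (pb_pair HP (q1 := h2 \o' g1) (q2 := g2)) as [uY [Uy1 Uy2]].
    { simp. reflexivity. }
    destruct (pb_pair HP (q1 := h1 \o' g1) (q2 := phi \o' uY)) as [ua [Ua1 Ua2]].
    { simp. reflexivity. }
    destruct (pb_pair HP (q1 := th \o' g1) (q2 := g2)) as [ub [Ub1 Ub2]].
    { simp. reflexivity. }
    nall.
    assert (Key : p \o' ua = p \o' ub).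
    { apply eqR_eq. apply (factor_lemma FC J2); apply eq_rel.
      - assert (E1 : uY \o' a2 = sR \o' h2).
        { apply (pb_ext HP); simp; reflexivity. }
        assert (E2 : phi \o' sR = s0 S \o' d0 R).
        { apply (@rel_mono _ _ S); simp; reflexivity. }
        assert (E3 : ua \o' a2 = sR \o' h1).
        { apply (pb_ext HP); simp; reflexivity. }
        assert (E4 : ub \o' a2 = sR \o' th).
        { apply (pb_ext HP); simp; reflexivity. }
        simp. reflexivity.
      - assert (E1 : uY \o' b2 = sS).
        { apply (pb_ext HP); simp; reflexivity. }
        assert (E2 : phi \o' sS = idm _).
        { apply (@rel_mono _ _ S); simp; reflexivity. }
        assert (E3 : ua \o' b2 = sS).
        { apply (pb_ext HP); simp; reflexivity. }
        assert (E0 : th \o' dl = s0 R).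
        { apply (@rel_mono _ _ R); simp; reflexivity. }
        assert (E4 : ub \o' b2 = sS).
        { apply (pb_ext HP); simp; reflexivity. }
        simp. reflexivity. }
    intros T x y z t v w [r1 [R10 R11]] [r2 [R20 R21]] [s3 [S30 S31]]
      [ra [sa [ua0 [Hx [Hy1 [Hy2 [Hz [Hu1 [Hu2 Hv]]]]]]]]]
      [rb [sb [ub0 [Hx' [Hy1' [Hy2' [Hz' [Hu1' [Hu2' Hv']]]]]]]]].
    subst x y z t v w ra sa rb sb. nall.
    destruct (pb_pair HRR (q1 := r1) (q2 := r2)) as [kR [KR1 KR2]].
    { simp. reflexivity. }
    destruct (pb_pair HG (q1 := kR) (q2 := s3)) as [k [K1 K2]].
    { simp. reflexivity. }
    nall.
    assert (E1 : uY \o' k = ua0).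
    { apply (pb_ext HP).
      - apply (@rel_mono _ _ R); simp; reflexivity.
      - apply (@rel_mono _ _ S); simp; reflexivity. }
    assert (E2 : ub \o' k = ub0).
    { apply (pb_ext HP).
      - apply (@rel_mono _ _ R); simp; reflexivity.
      - apply (@rel_mono _ _ S); simp; reflexivity. }
    exists r1, (phi \o' ua0), (ua \o' k).
    repeat split; simp; try reflexivity. }
Qed.
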